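(* Let $W$ be a group admitting an odd connected Coxeter system $(W,S)$ of rank $n\geq 3$ whose graph $\mathcal V_{(W,S)}$ is a tree, and let $m_1,\dots,m_{n-1}$ be the (multiset of) finite exponents of this system. Then there is an injective homomorphism $$W\hookrightarrow \operatorname{Aut}\big((\mathbb Z/m_1\mathbb Z)\ast(\mathbb Z/m_2\mathbb Z)\ast\cdots\ast(\mathbb Z/m_{n-1}\mathbb Z)\big).$$
   Context: A Coxeter system $(W,S)$ with $S=\{w_1,\dots,w_n\}$ means that $W$ has the presentation $\langle w_1,\dots,w_n \mid (w_iw_j)^{m_{ij}}=1\rangle$, where $m_{ii}=1$ and $m_{ij}=m_{ji}\in\{2,3,4,\dots\}\cup\{\infty\}$ for $i\neq j$ (no relation is imposed when $m_{ij}=\infty$). The numbers $m_{ij}$, $i\neq j$, are the exponents and $n$ is the rank. The system is odd if every exponent is odd or $\infty$. The graph $\mathcal V_{(W,S)}$ has vertex set $\{1,\dots,n\}$ and an edge between $i\neq j$ iff $m_{ij}<\infty$; the system is connected if $\mathcal V_{(W,S)}$ is connected. When $\mathcal V_{(W,S)}$ is a tree there are exactly $n-1$ finite exponents (one per edge). $\ast$ denotes free product. *)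

(* Defs.v *)
From mathcomp Require Import all_boot.
Set Implicit Arguments. Unset Strict Implicit. Unset Printing Implicit Defensive.

Record Grp := MkGrp {
  gcar :> Type;
  gmul : gcar -> gcar -> gcar;
  gone : gcar;
  ginv : gcar -> gcar;
  gmulA : forall a b c, gmul a (gmul b c) = gmul (gmul a b) c;
  gmul1l : forall a, gmul gone a = a;
  gmulVl : forall a, gmul (ginv a) a = gone
}.

Definition gpow (G : Grp) (x : G) (k : nat) : G := iter k (gmul x) (gone G).

Definition is_hom (G H : Grp) (f : G -> H) : Prop :=
  forall a b, f (gmul a b) = gmul (f a) (f b).

(* (G, g) is a presentation <g_i | Rel>: g satisfies Rel, and every family
   in any group satisfying Rel extends uniquely to a homomorphism. *)
Definition is_presentation (k : nat) (G : Grp) (g : 'I_k -> G)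
  (Rel : forall H : Grp, ('I_k -> H) -> Prop) : Prop :=
  Rel G g /\
  forall (H : Grp) (h : 'I_k -> H), Rel H h ->
    (exists f : G -> H, is_hom f /\ forall i, f (g i) = h i) /\
    (forall f1 f2 : G -> H, is_hom f1 -> is_hom f2 ->
       (forall i, f1 (g i) = h i) -> (forall i, f2 (g i) = h i) ->
       forall x, f1 x = f2 x).

(* Coxeter matrices: M i j = Some m for a finite exponent m, None for infinity. *)
Definition coxeter_matrix (n : nat) (M : 'I_n -> 'I_n -> option nat) : Prop :=
  (forall i, M i i = Some 1) /\
  (forall i j, M i j = M j i) /\
  (forall i j m, i != j -> M i j = Some m -> 2 <= m).

Definition coxeter_rel (n : nat) (M : 'I_n -> 'I_n -> option nat)
  (H : Grp) (h : 'I_n -> H) : Prop :=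
  forall i j m, M i j = Some m -> gpow (gmul (h i) (h j)) m = gone H.

Definition coxeter_system (n : nat) (M : 'I_n -> 'I_n -> option nat)
  (W : Grp) (s : 'I_n -> W) : Prop :=
  coxeter_matrix M /\ is_presentation s (coxeter_rel M).

Definition odd_coxeter (n : nat) (M : 'I_n -> 'I_n -> option nat) : Prop :=
  forall i j m, i != j -> M i j = Some m -> odd m.

(* The graph V_(W,S): edge between i != j iff m_ij < infinity. *)
Definition cox_adj (n : nat) (M : 'I_n -> 'I_n -> option nat) : rel 'I_n :=
  fun i j => (i != j) && isSome (M i j).

Definition cox_edges (n : nat) (M : 'I_n -> 'I_n -> option nat) :
  {set 'I_n * 'I_n} :=
  [set p : 'I_n * 'I_n | (p.1 < p.2)%N && isSome (M p.1 p.2)].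

Definition cox_connected (n : nat) (M : 'I_n -> 'I_n -> option nat) : Prop :=
  forall i j, connect (cox_adj M) i j.

(* A finite graph on n vertices is a tree iff connected with n-1 edges. *)
Definition cox_tree (n : nat) (M : 'I_n -> 'I_n -> option nat) : Prop :=
  cox_connected M /\ #|cox_edges M| = n.-1.

(* Relations of the free product Z/m_1 * ... * Z/m_k. *)
Definition cyclic_free_rel (k : nat) (m : 'I_k -> nat)
  (H : Grp) (h : 'I_k -> H) : Prop :=
  forall i, gpow (h i) (m i) = gone H.

Definition injective_hom_to_Aut (W F : Grp) (phi : W -> F -> F) : Prop :=
  (forall w, is_hom (phi w) /\ bijective (phi w)) /\
  (forall w1 w2 x, phi (gmul w1 w2) x = phi w1 (phi w2 x)) /\
  (forall w1 w2, (forall x, phi w1 x = phi w2 x) -> w1 = w2).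

(* Main.v *)
Require Import Defs.
From mathcomp Require Import all_boot all_algebra ring.
From Stdlib Require Import ProofIrrelevance FunctionalExtensionality Lia.
From mathcomp Require Import zify.
Set Implicit Arguments. Unset Strict Implicit. Unset Printing Implicit Defensive.

Local Notation "a ** b" := (gmul a b) (at level 40, left associativity).
Local Notation "x ^-1" := (ginv x).

Section GrpLemmas.
Variable G : Grp.
Implicit Types a b c x y : G.

Lemma gmulKl a b : a ^-1 ** (a ** b) = b.
Proof. by rewrite gmulA gmulVl gmul1l. Qed.

Lemma gmulVr a : a ** a ^-1 = gone G.
Proof.
have h : (a^-1)^-1 ** a^-1 ** (a ** a^-1) = a ** a^-1.
  by rewrite gmulVl gmul1l.
by rewrite -h -gmulA (gmulKl a) gmulVl.
Qed.

Lemma gmul1r a : a ** gone G = a.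
Proof. by rewrite -(gmulVl a) gmulA gmulVr gmul1l. Qed.

Lemma gmulVKl a b : a ** (a ^-1 ** b) = b.
Proof. by rewrite gmulA gmulVr gmul1l. Qed.

Lemma gmulKr a b : (b ** a) ** a ^-1 = b.
Proof. by rewrite -gmulA gmulVr gmul1r. Qed.

Lemma gmulVKr a b : (b ** a ^-1) ** a = b.
Proof. by rewrite -gmulA gmulVl gmul1r. Qed.

Lemma gmulIl a b c : a ** b = a ** c -> b = c.
Proof. by move=> h; rewrite -(gmulKl a b) h gmulKl. Qed.

Lemma gmulIr a b c : b ** a = c ** a -> b = c.
Proof. by move=> h; rewrite -(gmulKr a b) h gmulKr. Qed.

Lemma ginv_uniq a b : a ** b = gone G -> b = a ^-1.
Proof. by move=> h; apply: (gmulIl (a:=a)); rewrite h gmulVr. Qed.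

Lemma ginvK a : (a ^-1) ^-1 = a.
Proof. by symmetry; apply: ginv_uniq; rewrite gmulVl. Qed.

Lemma ginvM a b : (a ** b) ^-1 = b ^-1 ** a ^-1.
Proof.
symmetry; apply: ginv_uniq.
by rewrite -gmulA (gmulA b) gmulVr gmul1l gmulVr.
Qed.

Lemma ginv1 : (gone G) ^-1 = gone G.
Proof. by symmetry; apply: ginv_uniq; rewrite gmul1l. Qed.

Lemma gpowS x j : gpow x j.+1 = x ** gpow x j.
Proof. by []. Qed.

Lemma gpow0 x : gpow x 0 = gone G.
Proof. by []. Qed.

Lemma gpow1 x : gpow x 1 = x.
Proof. by rewrite gpowS gpow0 gmul1r. Qed.

Lemma gpowD x i j : gpow x (i + j) = gpow x i ** gpow x j.
Proof.
elim: i => [|i IH]; first by rewrite add0n gpow0 gmul1l.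
by rewrite addSn !gpowS IH gmulA.
Qed.

Lemma gpowSr x j : gpow x j.+1 = gpow x j ** x.
Proof. by rewrite -addn1 gpowD gpow1. Qed.

Lemma gpowM x i j : gpow x (i * j) = gpow (gpow x i) j.
Proof.
elim: j => [|j IH]; first by rewrite muln0.
by rewrite mulnS gpowD IH gpowS.
Qed.

Lemma gpow1n j : gpow (gone G) j = gone G.
Proof. by elim: j => // j IH; rewrite gpowS IH gmul1l. Qed.

Lemma gpow_mod x m j : gpow x m = gone G -> gpow x (j %% m) = gpow x j.
Proof.
move=> hm; rewrite {2}(divn_eq j m) gpowD mulnC gpowM hm gpow1n gmul1l.
by [].
Qed.

Lemma gpow_conj c x j : gpow (c ** x ** c ^-1) j = c ** gpow x j ** c ^-1.
Proof.
elim: j => [|j IH]; first by rewrite gpow0 gmul1r gmulVr.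
by rewrite gpowS IH !gmulA gmulVKr.
Qed.

Lemma gpow_inv x j : gpow (x ^-1) j = (gpow x j) ^-1.
Proof.
elim: j => [|j IH]; first by rewrite ginv1.
by rewrite gpowS IH gpowSr ginvM.
Qed.

End GrpLemmas.

Section HomLemmas.
Variables (G H : Grp) (f : G -> H).
Hypothesis hf : is_hom f.

Lemma hom1 : f (gone G) = gone H.
Proof.
apply: (gmulIl (a := f (gone G))); rewrite -hf gmul1l gmul1r //.
Qed.

Lemma homV a : f (a ^-1) = (f a) ^-1.
Proof. by apply: ginv_uniq; rewrite -hf gmulVr hom1. Qed.

Lemma homX a j : f (gpow a j) = gpow (f a) j.
Proof. by elim: j => [|j IH]; [exact: hom1| rewrite !gpowS hf IH]. Qed.

Lemma hom_inj_of_ker : (forall a, f a = gone H -> a = gone G) -> injective f.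
Proof.
move=> hk a b e; apply: (gmulIl (a := b ^-1)); rewrite gmulVl; apply: hk.
by rewrite hf homV e gmulVl.
Qed.
End HomLemmas.

Lemma hom_comp (G H K : Grp) (f : G -> H) (g : H -> K) :
  is_hom f -> is_hom g -> is_hom (g \o f).
Proof. by move=> hf hg a b /=; rewrite hf hg. Qed.
Section Pres.
Variables (k : nat) (Rel : forall H : Grp, ('I_k -> H) -> Prop).

Definition rel_stable := forall (H K : Grp) (f : H -> K) (h : 'I_k -> H),
  is_hom f -> Rel h -> Rel (f \o h).
Definition rel_reflect := forall (H K : Grp) (f : H -> K) (h : 'I_k -> H),
  is_hom f -> injective f -> Rel (f \o h) -> Rel h.

Variables (G : Grp) (g : 'I_k -> G).
Hypothesis pres : is_presentation g Rel.
Hypothesis stab : rel_stable.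

Lemma pres_uniq (H : Grp) (f1 f2 : G -> H) : is_hom f1 -> is_hom f2 ->
  (forall i, f1 (g i) = f2 (g i)) -> forall a, f1 a = f2 a.
Proof.
move=> h1 h2 e.
have R : Rel (f1 \o g) by apply: stab => //; exact: pres.1.
apply: ((pres.2 H _ R).2 f1 f2 h1 h2) => //.
by move=> i; rewrite /= e.
Qed.

Section Sub.
Variable P : G -> Prop.
Hypotheses (P1 : P (gone G)) (PM : forall a b, P a -> P b -> P (a ** b))
  (PV : forall a, P a -> P (a^-1)).
Definition subT := {a : G | P a}.
Definition sub_mul (a b : subT) : subT := exist _ _ (PM (proj2_sig a) (proj2_sig b)).
Definition sub_one : subT := exist _ _ P1.
Definition sub_inv (a : subT) : subT := exist _ _ (PV (proj2_sig a)).
Lemma sub_ext (a b : subT) : proj1_sig a = proj1_sig b -> a = b.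
Proof.
case: a b => a pa [b pb] /= e; subst b; congr exist; exact: proof_irrelevance.
Qed.
Definition SubGrp : Grp.
refine (@MkGrp subT sub_mul sub_one sub_inv _ _ _).
- by move=> a b c; apply: sub_ext; rewrite /= gmulA.
- by move=> a; apply: sub_ext; rewrite /= gmul1l.
- by move=> a; apply: sub_ext; rewrite /= gmulVl.
Defined.
End Sub.

Hypothesis refl : rel_reflect.

Lemma gen_ind (P : G -> Prop) : P (gone G) -> (forall a b, P a -> P b -> P (a ** b)) ->
  (forall a, P a -> P (a^-1)) -> (forall i, P (g i)) -> forall a, P a.
Proof.
move=> P1 PM PV Pg.
pose S := SubGrp P1 PM PV.
pose h : 'I_k -> S := fun i => exist _ (g i) (Pg i).
have vh : is_hom (fun a : S => proj1_sig a) by [].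
have R : Rel h.
  apply: (refl vh) => //; first by move=> a b; exact: sub_ext.
  by have -> : (fun a : S => proj1_sig a) \o h = g by [] ; exact: pres.1.
have [f [hf fg]] := ((pres.2 S h R).1).
move=> a.
have e := @pres_uniq G (fun a => proj1_sig (f a)) id (hom_comp hf vh) (fun _ _ => erefl).
rewrite -(e _ a); first exact: proj2_sig.
by move=> i /=; rewrite fg.
Qed.
End Pres.
Lemma cox_stable n (M : 'I_n -> 'I_n -> option nat) : rel_stable (coxeter_rel M).
Proof.
move=> H K f h hf R i j m e /=; rewrite -hf -homX // R // hom1 //.
Qed.
Lemma cox_reflect n (M : 'I_n -> 'I_n -> option nat) : rel_reflect (coxeter_rel M).
Proof.
move=> H K f h hf fi R i j m e; apply: fi; rewrite homX // hf hom1 //.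
exact: R e.
Qed.
Lemma cyc_stable k (m : 'I_k -> nat) : rel_stable (cyclic_free_rel m).
Proof. by move=> H K f h hf R i /=; rewrite -homX // R hom1. Qed.
Lemma cyc_reflect k (m : 'I_k -> nat) : rel_reflect (cyclic_free_rel m).
Proof.
move=> H K f h hf fi R i; apply: fi; rewrite homX // hom1 //; exact: R i.
Qed.

Section PermGrp.
Variables (X : Type) (Q : (X -> X) -> Prop).
Hypotheses (Qid : Q id) (Qcomp : forall f g, Q f -> Q g -> Q (f \o g))
  (Qinv : forall f g, cancel f g -> cancel g f -> Q f -> Q g).
Definition permT := {p : (X -> X) * (X -> X) | [/\ cancel p.1 p.2, cancel p.2 p.1 & Q p.1]}.
Lemma perm_ext (p q : permT) : (forall x, (proj1_sig p).1 x = (proj1_sig q).1 x) -> p = q.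
Proof.
case: p q => [[f f'] []] /= c1 c2 qf [[g g'] []] /= d1 d2 qg /= e.
have ef : f = g by apply: functional_extensionality.
subst g.
have ef' : f' = g'.
  apply: functional_extensionality => x.
  by rewrite -{1}(d2 x) c1.
subst g'; congr exist; exact: proof_irrelevance.
Qed.
Definition perm_mul (p q : permT) : permT.
refine (exist _ ((proj1_sig p).1 \o (proj1_sig q).1, (proj1_sig q).2 \o (proj1_sig p).2) _).
case: p q => [[f f'] []] /= c1 c2 qf [[g g'] []] /= d1 d2 qg /=; split.
- by move=> x /=; rewrite c1 d1.
- by move=> x /=; rewrite d2 c2.
- exact: Qcomp.
Defined.
Definition perm_one : permT.
refine (exist _ (id, id) _); split => //.
Defined.
Definition perm_inv (p : permT) : permT.
refine (exist _ ((proj1_sig p).2, (proj1_sig p).1) _).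
case: p => [[f f'] []] /= c1 c2 qf /=; split => //; exact: (Qinv c1 c2).
Defined.
Definition PermGrp : Grp.
refine (@MkGrp permT perm_mul perm_one perm_inv _ _ _).
- by move=> a b c; apply: perm_ext.
- by move=> a; apply: perm_ext.
- by move=> a; apply: perm_ext => x /=; case: a => [[f f'] []] /= c1 c2 qf /=; rewrite c1.
Defined.
Lemma perm_gpow (p : PermGrp) j x : (proj1_sig (gpow p j)).1 x = iter j (proj1_sig p).1 x.
Proof. by elim: j => //= j IH; rewrite IH. Qed.
End PermGrp.
Section NormalForm.
Variables (k : nat) (m : 'I_k -> nat).
Hypothesis hm : forall i, 1 < m i.
Variables (F : Grp) (x : 'I_k -> F).
Hypothesis presF : is_presentation x (cyclic_free_rel m).

Definition hdne (i : 'I_k) (t : seq ('I_k * nat)) :=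
  if t is (j, _) :: _ then j != i else true.
Fixpoint red (w : seq ('I_k * nat)) : bool :=
  if w is (i, a) :: t then [&& 0 < a, a < m i, red t & hdne i t] else true.
Definition splitw (i : 'I_k) (w : seq ('I_k * nat)) : nat * seq ('I_k * nat) :=
  if w is (j, a) :: t then (if j == i then (a, t) else (0, w)) else (0, w).
Definition joinw (i : 'I_k) (a : nat) t : seq ('I_k * nat) :=
  if a == 0 then t else (i, a) :: t.
Definition actw i w := joinw i ((splitw i w).1.+1 %% m i) (splitw i w).2.

Lemma split_props i w : red w ->
  [/\ (splitw i w).1 < m i, red (splitw i w).2, hdne i (splitw i w).2
    & joinw i (splitw i w).1 (splitw i w).2 = w].
Proof.
case: w => [|[j a] t] /=; first by split => //; have := hm i; case: (m i).
case/and4P => a0 am rt ht; case: eqP => [<-|/eqP ne] /=.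
  by split => //; rewrite /joinw (negPf (lt0n_neq0 a0)).
split => //=; [by have := hm i; case: (m i) | by rewrite a0 am rt ht].
Qed.

Lemma red_join i a t : a < m i -> red t -> hdne i t -> red (joinw i a t).
Proof. by rewrite /joinw; case: eqP => //= /eqP a0 am rt ht; rewrite lt0n a0 am rt ht. Qed.

Lemma split_join i a t : hdne i t -> splitw i (joinw i a t) = (a, t).
Proof.
rewrite /joinw; case: eqP => [->|_] /=; last by rewrite eqxx.
by case: t => [|[j b] t] //= /negPf ->.
Qed.

Lemma red_act i w : red w -> red (actw i w).
Proof. by move=> /(split_props i) [_ r h _]; apply: red_join => //; rewrite ltn_mod; have := hm i; case: (m i). Qed.

Lemma iter_act i w j : red w ->
  iter j (actw i) w = joinw i (((splitw i w).1 + j) %% m i) (splitw i w).2.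
Proof.
move=> rw; have [a_lt r h e] := split_props i rw.
elim: j => [|j IH]; first by rewrite addn0 modn_small.
rewrite iterS IH /actw split_join //=; congr joinw.
by rewrite -addn1 modnDml addn1 addnS.
Qed.

Definition X := {w : seq ('I_k * nat) | red w}.
Definition actX i (w : X) : X := exist _ (actw i (proj1_sig w)) (red_act i (proj2_sig w)).
Lemma val_iter_actX i j (w : X) : proj1_sig (iter j (actX i) w) = iter j (actw i) (proj1_sig w).
Proof. by elim: j => //= j ->. Qed.
Lemma iter_actX_m i (w : X) : iter (m i) (actX i) w = w.
Proof.
apply: val_inj => /=; rewrite val_iter_actX iter_act ?(proj2_sig w) //.
have [a_lt r h e] := split_props i (proj2_sig w).
by rewrite modnDr modn_small.
Qed.

Definition Sym := @PermGrp X (fun _ => True) I (fun _ _ _ _ => I) (fun _ _ _ _ _ => I).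
Definition symgen (i : 'I_k) : Sym.
refine (exist _ (actX i, iter (m i).-1 (actX i)) _); split => // w /=.
- by rewrite -iterSr prednK ?iter_actX_m // ltnW.
- by rewrite -iterS prednK ?iter_actX_m // ltnW.
Defined.

Lemma symgen_rel : cyclic_free_rel m symgen.
Proof.
move=> i; apply: perm_ext => w; rewrite perm_gpow /=.
exact: iter_actX_m.
Qed.


Variable rho : F -> Sym.
Hypotheses (hrho : is_hom rho) (rhox : forall i, rho (x i) = symgen i).
Definition rhof (f : F) : X -> X := (proj1_sig (rho f)).1.

Fixpoint evalw (w : seq ('I_k * nat)) : F :=
  if w is (i, a) :: t then gpow (x i) a ** evalw t else gone F.

Lemma eval_join i a t : evalw (joinw i a t) = gpow (x i) a ** evalw t.
Proof. by rewrite /joinw; case: eqP => [->|]; rewrite ?gmul1l. Qed.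

Lemma eval_act i w : red w -> evalw (actw i w) = x i ** evalw w.
Proof.
move=> /(split_props i) [al r h e].
rewrite -{2}e /actw !eval_join gpow_mod; last exact: presF.1.
by rewrite gpowS gmulA.
Qed.

Lemma rhof_mul a b w : rhof (a ** b) w = rhof a (rhof b w).
Proof. by rewrite /rhof hrho. Qed.

Lemma rhof_gpow a j w : rhof (gpow a j) w = iter j (rhof a) w.
Proof. by rewrite /rhof homX // perm_gpow. Qed.

Lemma eval_rho f (w : X) : evalw (proj1_sig (rhof f w)) = f ** evalw (proj1_sig w).
Proof.
move: f w; apply: (gen_ind presF (@cyc_stable _ m) (@cyc_reflect _ m)).
- by move=> w; rewrite /rhof hom1 // gmul1l.
- by move=> a b Pa Pb w; rewrite rhof_mul Pa Pb gmulA.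
- move=> a Pa w.
  have hV : rhof (a^-1) w = (proj1_sig (rho a)).2 w by rewrite /rhof homV.
  have c : rhof a ((proj1_sig (rho a)).2 w) = w.
    by rewrite /rhof; case: (rho a) => [[f f'] []] /= _ ->.
  rewrite hV; apply: (gmulIl (a := a)); rewrite -Pa c gmulA gmulVr gmul1l //.
- by move=> i w; rewrite /rhof rhox /= eval_act // (proj2_sig w).
Qed.

Lemma rho_app (w v : seq ('I_k * nat)) (hv : red v) :
  red (w ++ v) -> proj1_sig (rhof (evalw w) (exist _ v hv)) = w ++ v.
Proof.
elim: w => [|[i a] t IH] /=; first by rewrite /rhof hom1.
case/and4P => a0 am rt ht.
rewrite rhof_mul rhof_gpow.
set u := rhof (evalw t) _.
have eu : proj1_sig u = t ++ v by exact: IH.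
have ru : red (proj1_sig u) := proj2_sig u.
have -> : iter a (rhof (x i)) u = iter a (actX i) u.
  by rewrite /rhof rhox.
rewrite val_iter_actX iter_act // eu.
have -> : splitw i (t ++ v) = (0, t ++ v).
  by move: ht; case: (t ++ v) => [|[j b] s] //= /negPf ->.
by rewrite /= add0n modn_small // /joinw (negPf (lt0n_neq0 a0)).
Qed.

Lemma red_rcons w j : red w -> 1 < m j -> (if w is [::] then true else (last (j, 0) w).1 != j) ->
  red (rcons w (j, 1)).
Proof.
elim: w => [|[i a] t IH] /=; first by move=> _ ->.
case/and4P => a0 am rt ht mj hl; rewrite a0 am /=.
case: t IH rt ht hl => [|[i' a'] t] IH rt ht hl /=.
  by rewrite mj /= eq_sym hl.
have := IH rt mj hl; rewrite /= => ->.
exact: ht.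
Qed.

Lemma centerless : 1 < k -> forall f, (forall y, f ** y = y ** f) -> f = gone F.
Proof.
move=> k2 f cf.
pose w0 : X := exist _ [::] isT.
pose w := proj1_sig (rhof f w0).
have ew : evalw w = f by rewrite /w eval_rho /= gmul1r.
have rw : red w := proj2_sig (rhof f w0).
case Hw : w => [|[i a] t]; first by rewrite -ew Hw.
pose l := (last (i, a) t).1.
pose j : 'I_k := if l == Ordinal (ltn_trans (ltnSn 0) k2) then Ordinal k2 else Ordinal (ltn_trans (ltnSn 0) k2).
have jl : l != j.
  rewrite /j; case: ifP => [/eqP e|ne]; last by rewrite ne.
  rewrite [X in X != _]e; apply/eqP => /(congr1 val) //.
have rv : red [:: (j, 1)] by rewrite /= hm.
have rwv : red (w ++ [:: (j, 1)]).
  rewrite cats1 red_rcons // ?hm // Hw /=.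
  by move: jl; rewrite /l; case: (t) => [|p s] //=; rewrite eq_sym.
have e1 := rho_app rv rwv; rewrite ew in e1.
have e2 : rhof f (exist _ [:: (j, 1)] rv) = rhof (x j ** f) w0.
  rewrite -cf rhof_mul; congr (rhof f _); apply: val_inj.
  by rewrite /= /rhof rhox /= /actw /= modn_small ?hm.
move: e1; rewrite e2 rhof_mul -/w0 {1}/rhof rhox /= -/w Hw /actw /=.
case: eqP => [eji|/eqP nji] /=.
  move/(congr1 size); rewrite /joinw; case: eqP => _ /=; rewrite size_cat /=.
    by move=> h; exfalso; lia.
  by move=> h; exfalso; lia.
by rewrite /joinw /= modn_small ?hm // => -[/eqP]; rewrite eq_sym (negPf nji).
Qed.
End NormalForm.
Section Abel.
Variable p : nat.
Definition ZG : Grp.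
refine (@MkGrp 'Z_(p.+2) (fun a b => (a + b)%R) 0%R (fun a => (- a)%R) _ _ _).
- by move=> a b c; rewrite GRing.addrA.
- by move=> a; rewrite GRing.add0r.
- by move=> a; rewrite GRing.addNr.
Defined.
Lemma ZG_gpow (y : ZG) j : gpow y j = (y *+ j)%R.
Proof. by elim: j => // j IH; rewrite gpowS IH GRing.mulrS. Qed.
End Abel.

Lemma no_twist k (m : 'I_k -> nat) (F : Grp) (x : 'I_k -> F) :
  is_presentation x (cyclic_free_rel m) -> forall k0, odd (m k0) -> 1 < m k0 ->
  forall (s : F -> F) (a b f : F), is_hom s -> a^-1 ** b = x k0 -> s (x k0) = a ** b^-1 ->
  ~ (forall y, f ** s y ** f^-1 = y).
Proof.
move=> presF k0 om m1 s a b f hs eab esx hf.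
pose p := (m k0).-2.
have mp : m k0 = p.+2 by rewrite /p; case: (m k0) om m1 => [|[|q]].
pose h : 'I_k -> ZG p := fun j => if j == k0 then 1%R else 0%R.
have R : cyclic_free_rel m h.
  move=> j; rewrite /h ZG_gpow; case: eqP => [->|_]; last by rewrite GRing.mul0rn.
  by apply: val_inj; rewrite /= val_Zp_nat // mp modnn.
have [chi [hc cx]] := (presF.2 (ZG p) h R).1.
have e1 := hf (x k0); rewrite esx in e1.
move/(congr1 chi): e1; rewrite !hc !(homV hc) cx /h eqxx /=.
move/(congr1 chi): eab; rewrite hc !(homV hc) cx /h eqxx /=.
move=> e2 e3.
have : (1 + 1 = 0 :> 'Z_(p.+2))%R.
  rewrite -{1}e2 -e3; ring.
move=> /(congr1 val) /=; rewrite /Zp_trunc /=.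
have p1 : 0 < p by move: om; rewrite mp; case: (p).
rewrite (modn_small (m:=1)) // modn_small //; lia.
Qed.
Section Tree.
Variables (n : nat) (M : 'I_n -> 'I_n -> option nat).
Hypothesis Msym : forall i j, M i j = M j i.

Lemma path_prop (Q : 'I_n -> Prop) r v : connect (cox_adj M) r v -> Q r ->
  (forall u w, cox_adj M u w -> Q u -> Q w) -> Q v.
Proof.
move=> /connectP [p pth ->] Qr Qs.
elim: p r pth Qr => [|z q IH] r //= /andP [a pth] Qr.
exact: (IH z pth (Qs _ _ a Qr)).
Qed.

Lemma crossing (S : {set 'I_n}) p x0 : x0 \in S -> path (cox_adj M) x0 p ->
  last x0 p \notin S -> exists u v, [/\ u \in S, v \notin S & cox_adj M u v].
Proof.
elim: p x0 => [|z q IH] x0 /=; first by move=> ->.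
move=> x0S /andP [a pth] l.
case zS : (z \in S); first exact: IH zS pth l.
by exists x0, z; rewrite zS.
Qed.

Definition orient (u v : 'I_n) : 'I_n * 'I_n := if u < v then (u, v) else (v, u).

Lemma orient_edge u v : cox_adj M u v -> orient u v \in cox_edges M.
Proof.
rewrite /cox_adj /orient inE => /andP [ne sm]; case: (ltnP u v) => /= h.
  by rewrite h.
rewrite Msym sm andbT ltn_neqAle h andbT.
by apply: contra ne => /eqP e; apply/eqP/val_inj; rewrite /= e.
Qed.

Lemma potential (G : Grp) (lab : 'I_n * 'I_n -> G) : 0 < n -> cox_tree M ->
  exists zeta : 'I_n -> G, forall p, p \in cox_edges M -> (zeta p.1)^-1 ** zeta p.2 = lab p.
Proof.
move=> n0 [conn cardE].
have inv : forall j, j < n -> exists (S : {set 'I_n}) (C : {set 'I_n * 'I_n}) (zeta : 'I_n -> G),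
  [/\ #|S| = j.+1, #|C| = j, C \subset cox_edges M,
      (forall p, p \in C -> p.1 \in S /\ p.2 \in S) &
      (forall p, p \in C -> (zeta p.1)^-1 ** zeta p.2 = lab p)].
  elim=> [_|j IH jn].
    exists [set Ordinal n0], set0, (fun _ => gone G); split => //.
    - by rewrite cards1.
    - by rewrite cards0.
    - by rewrite sub0set.
    - by move=> p; rewrite inE.
    - by move=> p; rewrite inE.
  have [S [C [zeta [cS cC sC inS pz]]]] := IH (ltnW jn).
  have : 0 < #|~: S| by move: (cardsC S); rewrite card_ord cS; lia.
  case/card_gt0P => y; rewrite inE => yS.
  have : 0 < #|S| by rewrite cS.
  case/card_gt0P => x0 x0S.
  have [p pth ly] := connectP (conn x0 y).
  have ly' : last x0 p \notin S by rewrite -ly.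
  have [u [v [uS vS a]]] := crossing x0S pth ly'.
  pose pe := orient u v.
  have peE := orient_edge a.
  have peC : pe \notin C.
    apply/negP => /inS []; rewrite /pe /orient; case: (ltnP u v) => _ /= h1 h2.
      by rewrite h2 in vS.
    by rewrite h1 in vS.
  have uv : u != v by apply: contraNneq vS => <-.
  pose zeta' := fun w => if w == v then (if u < v then zeta u ** lab pe else zeta u ** (lab pe)^-1)
                         else zeta w.
  exists (v |: S), (pe |: C), zeta'; split.
  - by rewrite cardsU1 vS cS.
  - by rewrite cardsU1 peC cC.
  - by rewrite subUset sub1set peE sC.
  - move=> q; rewrite !inE => /orP [/eqP ->|/inS [h1 h2]]; last by split; rewrite ?inE ?h1 ?h2 orbT.
    rewrite /pe /orient; case: (ltnP u v) => _ /=; by split; rewrite ?inE ?eqxx ?uS ?orbT.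
  - move=> q; rewrite !inE => /orP [/eqP ->|qC]; last first.
      have [h1 h2] := inS q qC.
      have n1 : q.1 != v by apply: contraNneq vS => <-.
      have n2 : q.2 != v by apply: contraNneq vS => <-.
      by rewrite /zeta' (negPf n1) (negPf n2) pz.
    rewrite /zeta' /pe /orient; case: (ltnP u v) => h /=.
      by rewrite eqxx (negPf uv) gmulKl.
    have hv : ~~ (u < v) by rewrite -leqNgt.
    rewrite eqxx (negPf uv) ginvM ginvK -gmulA gmulVl gmul1r.
    by [].
have nn : n.-1 < n by rewrite prednK.
have [S [C [zeta [cS cC sC inS pz]]]] := inv n.-1 nn.
exists zeta => p pE; apply: pz.
have : C == cox_edges M by rewrite eqEcard sC cardE cC leqnn.
by move/eqP ->.
Qed.
End Tree.
Section AutGrp.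
Variable F : Grp.
Lemma hom_id : is_hom (@id F). Proof. by []. Qed.
Lemma hom_compF (f g : F -> F) : is_hom f -> is_hom g -> is_hom (f \o g).
Proof. by move=> hf hg; apply: hom_comp. Qed.
Lemma hom_invF (f g : F -> F) : cancel f g -> cancel g f -> is_hom f -> is_hom g.
Proof. by move=> c1 c2 hf a b; apply: (can_inj c1); rewrite hf !c2. Qed.
Definition AutGrp := @PermGrp F (@is_hom F F) hom_id hom_compF hom_invF.

Definition conjA (c : F) : AutGrp.
refine (exist _ ((fun y => c ** y ** c^-1), (fun y => c^-1 ** y ** c)) _).
split => /=.
- by move=> y; rewrite !gmulA gmulVl gmul1l gmulVKr.
- by move=> y; rewrite !gmulA gmulVr gmul1l gmulKr.
- by move=> a b; rewrite !gmulA gmulVKr.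
Defined.

Lemma conjA_hom : is_hom conjA.
Proof. by move=> a b; apply: perm_ext => y /=; rewrite ginvM !gmulA. Qed.
End AutGrp.

Section Main.
Variables (n : nat) (M : 'I_n -> 'I_n -> option nat) (W : Grp) (s : 'I_n -> W)
  (m : 'I_n.-1 -> nat) (e : 'I_n.-1 -> 'I_n * 'I_n) (F : Grp) (x : 'I_n.-1 -> F).
Hypotheses (n3 : 3 <= n) (hcox : coxeter_system M s) (hodd : odd_coxeter M)
  (htree : cox_tree M) (einj : injective e) (eE : forall k, e k \in cox_edges M)
  (eM : forall k, M (e k).1 (e k).2 = Some (m k))
  (presF : is_presentation x (cyclic_free_rel m)).

Let Msym : forall i j, M i j = M j i := hcox.1.2.1.
Let presW := hcox.2.

Lemma e_ne k : (e k).1 != (e k).2.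
Proof.
have := eE k; rewrite inE => /andP [lt _].
by apply: contraTneq lt => ->; rewrite ltnn.
Qed.

Lemma m_ge2 k : 1 < m k.
Proof. exact: hcox.1.2.2 _ _ _ (e_ne k) (eM k). Qed.
Lemma m_odd k : odd (m k).
Proof. exact: hodd (e_ne k) (eM k). Qed.

Lemma e_surj p : p \in cox_edges M -> exists k, e k = p.
Proof.
move=> pE.
have : [set e k | k in 'I_n.-1] == cox_edges M.
  rewrite eqEcard card_imset // card_ord htree.2 leqnn andbT.
  by apply/subsetP => q /imsetP [k _ ->].
move/eqP => eq; rewrite -eq in pE.
by case/imsetP: pE => k _ ->; exists k.
Qed.

Lemma s2 i : s i ** s i = gone W.
Proof. by have := presW.1 i i 1 (hcox.1.1 i); rewrite gpow1. Qed.
Lemma sV i : (s i)^-1 = s i.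
Proof. by symmetry; apply: ginv_uniq; exact: s2. Qed.

Definition lab (p : 'I_n * 'I_n) : F :=
  if [pick k | e k == p] is Some k then x k else gone F.
Lemma lab_e k : lab (e k) = x k.
Proof.
rewrite /lab; case: pickP => [k' /eqP /einj -> //|/(_ k)]; by rewrite eqxx.
Qed.

Lemma n0 : 0 < n. Proof. by apply: leq_trans n3. Qed.
Definition r : 'I_n := Ordinal n0.

Lemma zeta_ex : exists zeta : 'I_n -> F, zeta r = gone F /\
  forall k, (zeta (e k).1)^-1 ** zeta (e k).2 = x k.
Proof.
have [z0 hz] := potential Msym lab n0 htree.
exists (fun v => (z0 r)^-1 ** z0 v); split; first by rewrite gmulVl.
move=> k; rewrite ginvM ginvK -gmulA gmulVKl -lab_e; exact: hz.
Qed.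

Section WZ.
Variable zeta : 'I_n -> F.
Hypotheses (zr : zeta r = gone F) (zx : forall k, (zeta (e k).1)^-1 ** zeta (e k).2 = x k).

Lemma adj_info u v : cox_adj M u v -> exists k, M u v = Some (m k) /\
  ((e k = (u, v) /\ (zeta u)^-1 ** zeta v = x k) \/
   (e k = (v, u) /\ (zeta u)^-1 ** zeta v = (x k)^-1)).
Proof.
move=> a; have [k ek] := e_surj (orient_edge Msym a).
exists k; move: ek; rewrite /orient; case: (ltnP u v) => _ ek.
  by split; [rewrite -(eM k) ek | left; split => //; rewrite -zx ek].
split; first by rewrite Msym -(eM k) ek.
right; split => //; rewrite -zx ek /= ginvM ginvK //.
Qed.

Lemma psi_rel : cyclic_free_rel m (fun k => s (e k).1 ** s (e k).2).
Proof. by move=> k; apply: presW.1; exact: eM. Qed.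

Section WP.
Variable psi : F -> W.
Hypotheses (hpsi : is_hom psi) (psix : forall k, psi (x k) = s (e k).1 ** s (e k).2).

Lemma xm k : gpow (x k) (m k) = gone F.
Proof. exact: presF.1. Qed.

Lemma sig_rel : cyclic_free_rel m (fun k => zeta (e k).1 ** (zeta (e k).2)^-1).
Proof.
move=> k.
have -> : zeta (e k).1 ** (zeta (e k).2)^-1 = zeta (e k).1 ** (x k)^-1 ** (zeta (e k).1)^-1.
  by rewrite -zx ginvM ginvK !gmulA gmulKr.
by rewrite gpow_conj gpow_inv xm ginv1 gmul1r gmulVr.
Qed.

Variable sig : F -> F.
Hypotheses (hsig : is_hom sig) (sigx : forall k, sig (x k) = zeta (e k).1 ** (zeta (e k).2)^-1).

Lemma psi_adj u v : cox_adj M u v -> psi ((zeta u)^-1 ** zeta v) = s u ** s v.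
Proof.
case/adj_info => k [_ [[ek ->]|[ek ->]]]; first by rewrite psix ek.
by rewrite (homV hpsi) psix ek /= ginvM !sV.
Qed.

Lemma sig_adj u v : cox_adj M u v -> sig ((zeta u)^-1 ** zeta v) = zeta u ** (zeta v)^-1.
Proof.
case/adj_info => k [_ [[ek ->]|[ek ->]]]; first by rewrite sigx ek.
by rewrite (homV hsig) sigx ek /= ginvM ginvK.
Qed.

Lemma psi_zeta v : psi (zeta v) = s r ** s v.
Proof.
apply: (path_prop (Q := fun v => psi (zeta v) = s r ** s v) (htree.1 r v)).
  by rewrite zr (hom1 hpsi) s2.
move=> u w a h.
have -> : zeta w = zeta u ** ((zeta u)^-1 ** zeta w) by rewrite gmulVKl.
by rewrite hpsi h psi_adj // -gmulA (gmulA (s u)) s2 gmul1l.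
Qed.

Lemma sig_zeta v : sig (zeta v) = (zeta v)^-1.
Proof.
apply: (path_prop (Q := fun v => sig (zeta v) = (zeta v)^-1) (htree.1 r v)).
  by rewrite zr (hom1 hsig) ginv1.
move=> u w a h.
have -> : zeta w = zeta u ** ((zeta u)^-1 ** zeta w) by rewrite gmulVKl.
by rewrite hsig h sig_adj // gmulA gmulVl gmul1l gmulVKl.

Qed.

Lemma sig_inv f : sig (sig f) = f.
Proof.
apply: (pres_uniq presF (@cyc_stable _ m) (f1 := sig \o sig) (f2 := id)) => //.
  exact: hom_comp.
by move=> k /=; rewrite sigx hsig (homV hsig) !sig_zeta ginvK zx.
Qed.

Lemma psi_sig f : psi (sig f) = s r ** psi f ** s r.
Proof.
apply: (pres_uniq presF (@cyc_stable _ m) (f1 := psi \o sig) (f2 := fun f => s r ** psi f ** s r)).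
- exact: hom_comp.
- move=> a b; rewrite hpsi !gmulA; congr (_ ** _).
  by rewrite -(gmulA (s r ** psi a) (s r) (s r)) s2 gmul1r.
- move=> k /=; rewrite sigx hpsi (homV hpsi) !psi_zeta psix ginvM !sV !gmulA.
  by [].
Qed.

Lemma gen_W w : exists f, w = psi f \/ w = psi f ** s r.
Proof.
move: w; apply: (gen_ind presW (@cox_stable _ M) (@cox_reflect _ M)).
- by exists (gone F); left; rewrite (hom1 hpsi).
- have key : forall g, s r ** psi g = psi (sig g) ** s r.
    by move=> g; rewrite psi_sig -gmulA s2 gmul1r.
  move=> a b [f [->|->]] [g [->|->]].
  + by exists (f ** g); left; rewrite hpsi.
  + by exists (f ** g); right; rewrite hpsi gmulA.
  + by exists (f ** sig g); right; rewrite hpsi -gmulA key gmulA.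
  + by exists (f ** sig g); left; rewrite hpsi gmulA -(gmulA _ (s r)) key gmulA -gmulA s2 gmul1r.
- move=> a [f [->|->]].
    by exists f^-1; left; rewrite (homV hpsi).
  exists (sig f^-1); right; rewrite ginvM sV psi_sig (homV hpsi) -gmulA s2 gmul1r //.
- move=> v; exists (zeta v)^-1; right.
  by rewrite (homV hpsi) psi_zeta ginvM !sV -gmulA s2 gmul1r.
Qed.

Definition sigA : AutGrp F.
refine (exist _ (sig, sig) _); split => //=; exact: sig_inv.
Defined.
Definition genA (v : 'I_n) : AutGrp F := conjA ((zeta v)^-1) ** sigA.

Lemma genA2 i j : genA i ** genA j = conjA ((zeta i)^-1 ** zeta j).
Proof.
apply: perm_ext => y /=.
rewrite !hsig !(homV hsig) sig_zeta sig_inv !ginvK !ginvM !ginvK !gmulA.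
by [].
Qed.

Lemma phi_rel : coxeter_rel M genA.
Proof.
move=> i j m' Mij; rewrite genA2 -(homX (@conjA_hom F)).
suff -> : gpow ((zeta i)^-1 ** zeta j) m' = gone F by rewrite (hom1 (@conjA_hom F)).
case: (eqVneq i j) => [<-|nij].
  by rewrite gmulVl gpow1n.
have a : cox_adj M i j by rewrite /cox_adj nij Mij.
have [k [Mk [[_ ->]|[_ ->]]]] := adj_info a; rewrite Mk in Mij; case: Mij => <-.
  exact: xm.
by rewrite gpow_inv xm ginv1.
Qed.

Section WPhi.
Variable phi : W -> AutGrp F.
Hypotheses (hphi : is_hom phi) (phis : forall v, phi (s v) = genA v).

Lemma phi_psi f : phi (psi f) = conjA f.
Proof.
apply: (pres_uniq presF (@cyc_stable _ m) (f1 := phi \o psi) (f2 := @conjA F)).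
- exact: hom_comp.
- exact: conjA_hom.
- by move=> k /=; rewrite psix hphi !phis genA2 zx.
Qed.

Lemma phi_sr : phi (s r) = sigA.
Proof.
rewrite phis /genA zr ginv1 (hom1 (@conjA_hom F)) gmul1l //.
Qed.

Lemma phi_ker w : phi w = gone _ -> w = gone W.
Proof.
have [f [->|->]] := gen_W w.
  rewrite phi_psi => h.
  have c : forall y, f ** y = y ** f.
    move=> y; have := congr1 (fun p => (proj1_sig p).1 y) h => /= e1.
    by rewrite -{2}e1 gmulVKr.
  have [rho [hr rx]] := (presF.2 (Sym m) (symgen m_ge2) (symgen_rel m_ge2)).1.
  have k2 : 1 < n.-1 by move: n3; case: (n) => [|[|[|q]]].
  by rewrite (centerless presF hr rx k2 c) (hom1 hpsi).
rewrite hphi phi_psi phi_sr => h; exfalso.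
have k0n : 0 < n.-1 by move: n3; case: (n) => [|[|[|q]]].
pose k0 : 'I_n.-1 := Ordinal k0n.
apply: (no_twist presF (m_odd k0) (m_ge2 k0) hsig (zx k0) (sigx k0) (f := f)).
move=> y; have := congr1 (fun p => (proj1_sig p).1 y) h => /=.
by [].
Qed.

Lemma final_phi : exists phi' : W -> F -> F, injective_hom_to_Aut phi'.
Proof.
exists (fun w => (proj1_sig (phi w)).1); split; [|split].
- move=> w; case: (phi w) => [[f f'] []] /= c1 c2 hf; split => //.
  by exists f'.
- by move=> w1 w2 y; rewrite hphi.
- move=> w1 w2 h.
  have e1 : phi w1 = phi w2 by apply: perm_ext.
  have : phi (w1^-1 ** w2) = gone _ by rewrite hphi (homV hphi) e1 gmulVl.
  move/phi_ker => e2.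
  by rewrite -(gmulVKl w1 w2) e2 gmul1r.
Qed.
End WPhi.

Lemma final_WP : exists phi' : W -> F -> F, injective_hom_to_Aut phi'.
Proof.
have [phi [hphi phis]] := (presW.2 (AutGrp F) genA phi_rel).1.
exact: (final_phi hphi phis).
Qed.
End WP.

Lemma final_WZ : exists phi' : W -> F -> F, injective_hom_to_Aut phi'.
Proof.
have [psi [hpsi psix]] := (presF.2 W _ psi_rel).1.
have [sig [hsig sigx]] := (presF.2 F _ sig_rel).1.
exact: (final_WP hpsi psix hsig sigx).
Qed.
End WZ.

Lemma final_main : exists phi' : W -> F -> F, injective_hom_to_Aut phi'.
Proof.
have [zeta [zr zx]] := zeta_ex.
exact: (final_WZ zr zx).
Qed.
End Main.

Theorem corollary2p10 (n : nat) (M : 'I_n -> 'I_n -> option nat)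
  (W : Grp) (s : 'I_n -> W)
  (m : 'I_n.-1 -> nat) (e : 'I_n.-1 -> 'I_n * 'I_n)
  (F : Grp) (x : 'I_n.-1 -> F) :
  (3 <= n)%N ->
  coxeter_system M s ->
  odd_coxeter M ->
  cox_tree M ->
  (* e enumerates the edges of the tree, m k being the exponent on edge e k *)
  injective e ->
  (forall k, e k \in cox_edges M) ->
  (forall k, M (e k).1 (e k).2 = Some (m k)) ->
  (* F = (Z/m_1) * ... * (Z/m_(n-1)) *)
  is_presentation x (cyclic_free_rel m) ->
  exists phi : W -> F -> F, injective_hom_to_Aut phi.
Proof.
move=> n3 hcox hodd htree einj eE eM presF.
exact: (final_main n3 hcox hodd htree einj eE eM presF).
Qed.
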